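(* Let $\Lambda$ be an operator that satisfies balanced treatment and non-arbitrariness. Then $\Lambda$ satisfies present boundedness.
   Context: Agents are elements of $\mathbb{N}$; $N$ denotes a nonempty finite subset of $\mathbb{N}$. A (standard) claims problem is a triple $(N,c,E)$ with $c\in\mathbb{R}_+^N$, $E\in\mathbb{R}_+$, $C=\sum_{i\in N}c_i>0$ and $E\le C$. An allocation for it is $x\in\mathbb{R}^N$ with $0\le x_i\le c_i$ for all $i$ and $\sum_ix_i=E$. A standard rule $R$ assigns to each standard claims problem an allocation $R(N,c,E)$; $\mathcal{R}$ is the set of standard rules. A history for $N$ is a finite sequence $h=\{(c^{(t)},x^{(t)})\}_{t=1}^{|T|}$ where for each $t$, $c^{(t)}\in\mathbb{R}_+^N$ and $x^{(t)}$ is an allocation of $(N,c^{(t)},\sum_ix^{(t)}_i)$. A historical claims problem is $(N,c,E,h)$ with $(N,c,E)$ a standard claims problem and $h$ a history for $N$; its allocations are the allocations of $(N,c,E)$. A general rule assigns to each historical claims problem an allocation. An operator $\Lambda$ assigns to each standard rule $R$ a general rule $\Lambda(R)$. The history-adjusted claims are $\widetilde{c}_i=c_i+\sum_t(c^{(t)}_i-x^{(t)}_i)$. Axioms on operators (required for every $R\in\mathcal{R}$ and every historical problem $(N,c,E,h)$): Present boundedness: for each $i\in N$, if $R_i(N,\widetilde{c},E)\ge c_i$ then $\Lambda_i(R)(N,c,E,h)=c_i$. Balanced treatment: for each $i,j\in N$ with $\Lambda_i(R)(N,c,E,h)<c_i$ and $\Lambda_j(R)(N,c,E,h)<c_j$,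 $\Lambda_i(R)(N,c,E,h)-R_i(N,\widetilde{c},E)=\Lambda_j(R)(N,c,E,h)-R_j(N,\widetilde{c},E)$. Non-arbitrariness: for each $i\in N$ with $\Lambda_i(R)(N,c,E,h)=c_i$ and $R_i(N,\widetilde{c},E)<c_i$, we have $\Lambda_i(R)(N,c,E,h)-R_i(N,\widetilde{c},E)\le\Lambda_j(R)(N,c,E,h)-R_j(N,\widetilde{c},E)$ for all $j\in N$ with $\Lambda_j(R)(N,c,E,h)<c_j$. *)

(* Defs.v *)
From HB Require Import structures.
From mathcomp Require Import all_boot all_order all_algebra.
From mathcomp Require Import finmap.
From mathcomp Require Import Rstruct.
From Stdlib Require Import Rdefinitions.

Set Implicit Arguments.
Unset Strict Implicit.
Unset Printing Implicit Defensive.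

Import Order.TTheory GRing.Theory Num.Theory.
Local Open Scope ring_scope.


Definition vec (N : {fset nat}) := {ffun N -> R}.

Definition is_standard (N : {fset nat}) (c : vec N) (E : R) : Prop :=
  N != fset0%fset /\ (forall i : N, 0 <= c i) /\ 0 <= E /\
  0 < \sum_(i : N) c i /\ E <= \sum_(i : N) c i.

Definition is_allocation (N : {fset nat}) (c : vec N) (E : R) (x : vec N) : Prop :=
  (forall i : N, 0 <= x i /\ x i <= c i) /\ \sum_(i : N) x i = E.

(* Standard rules: assign an allocation to each standard claims problem
   (values on non-standard inputs are irrelevant). *)
Definition std_rule :=
  { Rf : forall N : {fset nat}, vec N -> R -> vec N |
    forall N c E, is_standard c E -> is_allocation c E (Rf N c E) }.

Definition app_std (Rr : std_rule) : forall N : {fset nat}, vec N -> R -> vec N :=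
  proj1_sig Rr.
Arguments app_std Rr N c E : clear implicits.

(* Histories: finite sequences of pairs (c^(t), x^(t)). *)
Definition history (N : {fset nat}) := seq (vec N * vec N).

Definition is_history (N : {fset nat}) (h : history N) : Prop :=
  forall t, t \in h ->
    (forall i : N, 0 <= t.1 i) /\
    is_allocation t.1 (\sum_(i : N) t.2 i) t.2.

Definition gen_rule :=
  { G : forall N : {fset nat}, vec N -> R -> history N -> vec N |
    forall N c E h, is_standard c E -> is_history h ->
      is_allocation c E (G N c E h) }.

Definition app_gen (G : gen_rule) :
  forall N : {fset nat}, vec N -> R -> history N -> vec N := proj1_sig G.
Arguments app_gen G N c E h : clear implicits.

Definition operator := std_rule -> gen_rule.

Definition adj_claims (N : {fset nat}) (c : vec N) (h : history N) : vec N :=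
  [ffun i => c i + \sum_(t <- h) (t.1 i - t.2 i)].

Definition present_boundedness (L : operator) : Prop :=
  forall (Rr : std_rule) (N : {fset nat}) (c : vec N) (E : R) (h : history N),
    is_standard c E -> is_history h ->
    forall i : N,
      c i <= app_std Rr N (adj_claims c h) E i ->
      app_gen (L Rr) N c E h i = c i.

Definition balanced_treatment (L : operator) : Prop :=
  forall (Rr : std_rule) (N : {fset nat}) (c : vec N) (E : R) (h : history N),
    is_standard c E -> is_history h ->
    forall i j : N,
      app_gen (L Rr) N c E h i < c i ->
      app_gen (L Rr) N c E h j < c j ->
      app_gen (L Rr) N c E h i - app_std Rr N (adj_claims c h) E i =
      app_gen (L Rr) N c E h j - app_std Rr N (adj_claims c h) E j.

Definition non_arbitrariness (L : operator) : Prop :=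
  forall (Rr : std_rule) (N : {fset nat}) (c : vec N) (E : R) (h : history N),
    is_standard c E -> is_history h ->
    forall i : N,
      app_gen (L Rr) N c E h i = c i ->
      app_std Rr N (adj_claims c h) E i < c i ->
      forall j : N, app_gen (L Rr) N c E h j < c j ->
        app_gen (L Rr) N c E h i - app_std Rr N (adj_claims c h) E i <=
        app_gen (L Rr) N c E h j - app_std Rr N (adj_claims c h) E j.

(* Main.v *)
Require Import Defs.
From HB Require Import structures.
From mathcomp Require Import all_boot all_order all_algebra.
From mathcomp Require Import finmap.
From mathcomp Require Import Rstruct.
From Stdlib Require Import Rdefinitions.
Import Order.TTheory GRing.Theory Num.Theory.
Local Open Scope ring_scope.

Lemma adj_ge (N : {fset nat}) (c : vec N) (h : history N) :
  is_history h -> forall i : N, c i <= adj_claims c h i.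
Proof.
move=> Hh i; rewrite /adj_claims ffunE lerDl.
rewrite big_seq; apply: sumr_ge0 => t /Hh [_ [/(_ i) [_ H] _]].
by rewrite subr_ge0.
Qed.

Lemma adj_std (N : {fset nat}) (c : vec N) (E : R) (h : history N) :
  is_standard c E -> is_history h -> is_standard (adj_claims c h) E.
Proof.
move=> [HN [Hc [HE [Hs HEs]]]] Hh.
have Hle : \sum_(i : N) c i <= \sum_(i : N) adj_claims c h i.
  by apply: ler_sum => i _; apply: adj_ge.
split; first exact: HN. split; first by move=> i; move: (Hc i) (adj_ge _ c _ Hh i); apply: le_trans.
split=> //; split; first exact: lt_le_trans Hs Hle.
exact: le_trans HEs Hle.
Qed.

Theorem lemma1 (L : operator) :
  balanced_treatment L -> non_arbitrariness L -> present_boundedness L.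
Proof.
move=> BT NA Rr N c E h Hst Hh i Hci.
set x := app_gen (L Rr) N c E h.
set r := app_std Rr N (adj_claims c h) E.
have [Hx HxE] : is_allocation c E x by rewrite /x /app_gen; apply: (proj2_sig (L Rr)).
have [Hr HrE] : is_allocation (adj_claims c h) E r.
  by rewrite /r /app_std; apply: (proj2_sig Rr); exact: adj_std.
have := (Hx i).2; rewrite le_eqVlt => /orP [/eqP //|Hlt].
exfalso.
have Hdi : x i - r i < 0 by rewrite subr_lt0; exact: lt_le_trans Hlt Hci.
have Hall : forall j : N, x j - r j <= 0.
  move=> j; have := (Hx j).2; rewrite le_eqVlt => /orP [/eqP Hj|Hj].
    case: (leP (c j) (r j)) => Hrj; first by rewrite subr_le0 Hj.
    have := NA Rr N c E h Hst Hh j Hj Hrj i Hlt.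
    rewrite -/x -/r => H.
    have : 0 < x j - r j by rewrite Hj subr_gt0.
    move=> H2; have := lt_le_trans H2 H; move=> H3.
    by have := lt_trans H3 Hdi; rewrite ltxx.
  by rewrite (BT Rr N c E h Hst Hh j i Hj Hlt) ltW.
have Hsum : \sum_(j : N) (x j - r j) = 0 by rewrite sumrB HxE HrE subrr.
have : \sum_(j : N) (x j - r j) < 0.
  rewrite (bigD1 i) //=.
  have : \sum_(j : N | j != i) (x j - r j) <= 0 by apply: sumr_le0 => j _; apply: Hall.
  move=> H; apply: (lt_le_trans (ltr_leD Hdi H)); by rewrite addr0.
by rewrite Hsum ltxx.
Qed.
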